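(* Let $\mathfrak R\subseteq\mathfrak R(d_*,L_*,s_* )$ be a cubical iterated graph system with replacement graphs $G_m$, and let $n\in\mathbb N$. For every $\tilde w\in W_\#$ there is a folding of $G_{n+|\tilde w|}$ onto $\tilde w\cdot W_n:=\{\tilde wu: u\in W_n\}$.
   Context: Graphs: $(V,E)$ with $V$ finite non-empty, $E\subseteq V\times V$, $(x,y)\in E\Rightarrow(y,x)\notin E$; $\{x,y\}\in E$ means either orientation. A mapping between graphs $\varphi:G\to G'$ is a map on vertices such that each edge $\{x,y\}$ has $\varphi(x)=\varphi(y)$ or $\{\varphi(x),\varphi(y)\}\in E(G')$. For $U\subseteq V(G)$, $\langle U\rangle$ is the induced subgraph; a folding of $G$ onto $U$ is a mapping between graphs $\varphi:G\to\langle U\rangle$ with $\varphi|_U=\mathrm{id}_U$. An iterated graph system (IGS) $\mathfrak R$ consists of a connected graph $G_1=(S,E)$, a finite set $\mathcal T$ of types, a surjective typing $\mathfrak t:E\to\mathcal T$ and non-empty gluing rules $I_t\subseteq S\times S$ ($t\in\mathcal T$). With $W_m=S^m$, $W_\#=\bigcup_{m\ge1}W_m$ and $[w]_k=w_1\cdots w_k$, the replacement graphs $G_m=(W_m,E_m)$ and their typings are defined recursively: $(w,v)\in E_{m+1}$ iff either (1) $[w]_m=[v]_m$ and $(w_{m+1},v_{m+1})\in E$ (type $\mathfrak t(w_{m+1},v_{m+1})$), or (2) $([w]_m,[v]_m)\in E_m$ and $(w_{m+1},v_{m+1})\in I_{\mathfrak t([w]_m,[v]_m)}$ (type $\mathfrak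 t([w]_m,[v]_m)$). A mapping of IGS $\varphi:\mathfrak R\to\mathfrak R'$ is a graph mapping $G_1\to G_1'$ such that (i) if $\varphi(w_1)=\varphi(v_1)$ for an edge $\{w_1,v_1\}$ of type $t$ then $\varphi(w_2)=\varphi(v_2)$ for all $(w_2,v_2)\in I_t$; (ii) if $(w_1,v_1)\in E$ has type $t$ and $(\varphi(w_1),\varphi(v_1))\in E'$ has type $t'$ then $(\varphi(w_2),\varphi(v_2))\in I'_{t'}$ for all $(w_2,v_2)\in I_t$; (iii) if $(w_1,v_1)\in E$ has type $t$ and $(\varphi(v_1),\varphi(w_1))\in E'$ has type $t'$ then $(\varphi(v_2),\varphi(w_2))\in I'_{t'}$ for all $(w_2,v_2)\in I_t$. An isomorphism of IGS is a graph isomorphism such that it and its inverse are mappings of IGS. $\mathfrak R$ is a sub-system of $\mathfrak R'$ ($\mathfrak R\subseteq\mathfrak R'$) if $S\subseteq S'$, $\mathcal T=\mathcal T'$ and the inclusion $S\to S'$ is a mapping of IGS. Cubical IGS: for integers $d_*\ge1$, $s_*\ge1$, $L_*\ge3$, let $\mathfrak R(d_*,L_*,s_* )$ have symbols $S(d_*,L_*,s_* )=\{1,\dots,L_*\}^{d_*}\times\{\underline1,\dots,\underline{s_*}\}$, coordinate functions $c_i(w)$ ($i=1,\dots,d_*$) and sheet $s(w)$; types $\{t_1,\dots,t_{d_*}\}$; $(w,v)$ is an edge of type $t_j$ iff $c_i(v)=c_i(w)$ for $i\neq j$ and $c_j(v)=c_j(w)+1$; $(w,v)\in I_{t_j}$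 iff $c_i(w)=c_i(v)$ for $i\ne j$, $(c_j(w),c_j(v))=(L_*,1)$ and $s(w)=s(v)$. Define maps on $S(d_*,L_*,s_* )$, all preserving the sheet $s$ and all coordinates other than those listed: $\eta_j$: $c_j\mapsto L_*+1-c_j$; for $j\neq k$, $\alpha^+_{j,k}$ swaps $c_j$ and $c_k$; $\alpha^-_{j,k}$ sets $c_k(\alpha(w))=L_*+1-c_j(w)$ and $c_j(\alpha(w))=L_*+1-c_k(w)$. Let $\mathcal G(d_*,L_*,s_* )$ be the set of all these maps. A cubical IGS is a sub-system $\mathfrak R\subseteq\mathfrak R(d_*,L_*,s_* )$ such that: (C1) for each $j$, every $w\in S(d_*,L_*,s_* )$ with $c_i(w)\in\{1,L_*\}$ for all $i\neq j$ and $s(w)=\underline1$ (call this condition $(\ast_j)$) lies in $S(\mathfrak R)$; (C2) if $w,v$ satisfy $(\ast_j)$ for the same $j$, $c_i(v)=c_i(w)$ for $i\neq j$ and $c_j(v)=c_j(w)+1$, then $(w,v)\in E(\mathfrak R)$; (C3) if $w,v$ satisfy $(\ast_j)$ for the same $j$, $c_i(w)=c_i(v)$ for $i\neq j$ and $(c_j(w),c_j(v))=(L_*,1)$, then $(w,v)\in I_{t_j}(\mathfrak R)$; (C4) for every $\alpha\in\mathcal G(d_*,L_*,s_* )$ the restriction $\alpha|_{S(\mathfrak R)}$ is an isomorphism of IGS $\mathfrak R\to\mathfrak R$. *)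

(* Defs.v *)
From mathcomp Require Import all_boot.
Set Implicit Arguments. Unset Strict Implicit. Unset Printing Implicit Defensive.

(* Iterated graph systems.  An IGS is encoded inside an ambient finite type  *)
(* V: its symbol set S is the finite set [sym], its edge set E is [edge]     *)
(* (oriented pairs), its typing is [typ] (only meaningful on edges), and its *)
(* gluing rules are [glue t] (t : T, the finite type of types).              *)
Record IGS (V T : finType) := MkIGS {
  sym  : {set V};
  edge : rel V;
  typ  : V -> V -> T;
  glue : T -> rel V }.

Definition uedge (V T : finType) (R : IGS V T) : rel V :=
  fun x y => edge R x y || edge R y x.

Definition is_IGS (V T : finType) (R : IGS V T) : Prop :=
  [/\ (exists x, x \in sym R),
      (forall x y, edge R x y -> (x \in sym R) && (y \in sym R)),
      (forall x y, edge R x y -> ~~ edge R y x) &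
      (forall x y, x \in sym R -> y \in sym R -> connect (uedge R) x y)] /\
  [/\
      (forall t : T, exists x y, edge R x y /\ typ R x y = t),
      (forall t : T, exists x y, glue R t x y) &
      (forall t x y, glue R t x y -> (x \in sym R) && (y \in sym R))].

Definition igs_map (V T V' T' : finType) (R : IGS V T) (R' : IGS V' T')
    (phi : V -> V') : Prop :=
  [/\ (forall x, x \in sym R -> phi x \in sym R'),
      (forall x y, edge R x y ->
         phi x = phi y \/ uedge R' (phi x) (phi y)),
      (forall w1 v1, edge R w1 v1 -> phi w1 = phi v1 ->
         forall w2 v2, glue R (typ R w1 v1) w2 v2 -> phi w2 = phi v2),
      (forall w1 v1, edge R w1 v1 -> edge R' (phi w1) (phi v1) ->
         forall w2 v2, glue R (typ R w1 v1) w2 v2 ->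
           glue R' (typ R' (phi w1) (phi v1)) (phi w2) (phi v2)) &
      (forall w1 v1, edge R w1 v1 -> edge R' (phi v1) (phi w1) ->
         forall w2 v2, glue R (typ R w1 v1) w2 v2 ->
           glue R' (typ R' (phi v1) (phi w1)) (phi v2) (phi w2))].

Definition igs_iso (V T : finType) (R : IGS V T) (phi : V -> V) : Prop :=
  exists psi : V -> V,
    [/\ {in sym R, cancel phi psi}, {in sym R, cancel psi phi},
        igs_map R R phi & igs_map R R psi].

Definition subsystem (V T : finType) (R R' : IGS V T) : Prop :=
  {subset sym R <= sym R'} /\ igs_map R R' id.

Definition inW (V T : finType) (R : IGS V T) (m : nat) (w : seq V) : bool :=
  (size w == m) && all (mem (sym R)) w.

Definition inWsharp (V T : finType) (R : IGS V T) (w : seq V) : Prop :=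
  exists m, 0 < m /\ inW R m w.

(* Type of the edge (w,v) of the replacement graph, computed on the
   reversed words (last letter first); None if (w,v) is not an edge. *)
Fixpoint redgeT (V T : finType) (R : IGS V T) (rw rv : seq V) : option T :=
  match rw, rv with
  | a :: rw', b :: rv' =>
      if rw' == rv' then (if edge R a b then Some (typ R a b) else None)
      else match redgeT R rw' rv' with
           | Some t => if glue R t a b then Some t else None
           | None => None
           end
  | _, _ => None
  end.

Definition Gedge (V T : finType) (R : IGS V T) (m : nat) (w v : seq V) : bool :=
  [&& inW R m w, inW R m v & redgeT R (rev w) (rev v) != None].

Definition folding (V T : finType) (R : IGS V T) (m : nat)
    (U : seq V -> Prop) (phi : seq V -> seq V) : Prop :=
  [/\ (forall x, inW R m x -> U (phi x)),
      (forall x y, Gedge R m x y ->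
         phi x = phi y \/ Gedge R m (phi x) (phi y) \/ Gedge R m (phi y) (phi x)) &
      (forall u, U u -> phi u = u)].

Definition prefixed (V T : finType) (R : IGS V T) (wt : seq V) (n : nat)
    (x : seq V) : Prop :=
  exists u, inW R n u /\ x = wt ++ u.

(* Coordinates are 0-based: c_i(w) = val (w.1 i) + 1 ∈ {1..L};
   sheet s(w) = val w.2 + 1 ∈ {1..s}. *)
Definition cubeV (d L s : nat) : finType := ({ffun 'I_d -> 'I_L} * 'I_s)%type.

Section Cube.
Variables (d L s : nat).
Local Notation V := (cubeV d L s).

Definition cedge (j : 'I_d) (w v : V) : bool :=
  [forall i, (i != j) ==> (v.1 i == w.1 i)] && (val (v.1 j) == (val (w.1 j)).+1).

Definition cglue (j : 'I_d) (w v : V) : bool :=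
  [&& [forall i, (i != j) ==> (w.1 i == v.1 i)],
      val (w.1 j) == L.-1, val (v.1 j) == 0 & w.2 == v.2].

Definition ctyp (hd : 0 < d) (w v : V) : 'I_d :=
  odflt (Ordinal hd) [pick j | cedge j w v].

Definition cubeIGS (hd : 0 < d) : IGS V 'I_d :=
  @MkIGS V 'I_d setT (fun w v => [exists j, cedge j w v]) (ctyp hd) cglue.

Definition star (j : 'I_d) (w : V) : bool :=
  [forall i, (i != j) ==> ((val (w.1 i) == 0) || (val (w.1 i) == L.-1))]
  && (val w.2 == 0).

Definition eta_map (j : 'I_d) (w : V) : V :=
  ([ffun i => if i == j then rev_ord (w.1 i) else w.1 i], w.2).
Definition alpha_plus (j k : 'I_d) (w : V) : V :=
  ([ffun i => if i == j then w.1 k else if i == k then w.1 j else w.1 i], w.2).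
Definition alpha_minus (j k : 'I_d) (w : V) : V :=
  ([ffun i => if i == j then rev_ord (w.1 k)
              else if i == k then rev_ord (w.1 j) else w.1 i], w.2).

Definition cubical (hd : 0 < d) (R : IGS V 'I_d) : Prop :=
  [/\ is_IGS R, subsystem R (cubeIGS hd) &
      (forall j w, star j w -> w \in sym R)] /\
  [/\
      (forall j w v, star j w -> star j v -> cedge j w v -> edge R w v),
      (forall j w v, star j w -> star j v ->
         [forall i, (i != j) ==> (w.1 i == v.1 i)] ->
         val (w.1 j) == L.-1 -> val (v.1 j) == 0 -> glue R j w v) &
      ((forall j, igs_iso R (eta_map j)) /\
       (forall j k, j != k -> igs_iso R (alpha_plus j k) /\ igs_iso R (alpha_minus j k)))].
End Cube.

(* Main.v *)
Require Import Defs.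
From mathcomp Require Import all_boot.
Set Implicit Arguments. Unset Strict Implicit. Unset Printing Implicit Defensive.

Section Gen.
Variables (V T : finType) (R : IGS V T).
Hypothesis irr : forall x, ~~ edge R x x.

Lemma redgeT_refl r : redgeT R r r = None.
Proof. by case: r => [|c r] //=; rewrite eqxx (negbTE (irr c)). Qed.

Lemma redgeT_same r1 r2 a : size r1 = size r2 ->
  redgeT R (r1 ++ [:: a]) (r2 ++ [:: a]) = redgeT R r1 r2.
Proof.
elim: r1 r2 => [|x r1 IH] [|y r2] //= Hs.
  by rewrite (negbTE (irr a)).
case: Hs => Hs; by rewrite eqseq_cat // eqxx andbT IH.
Qed.

Lemma redgeT_diff r1 r2 x y t : size r1 = size r2 -> x != y ->
  redgeT R (r1 ++ [:: x]) (r2 ++ [:: y]) = Some t ->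
  [/\ edge R x y, t = typ R x y & all2 (glue R t) r1 r2].
Proof.
elim: r1 r2 t => [|p r1 IH] [|q r2] t //= Hs Hxy.
  by case: ifP => // e [<-].
case: Hs => Hs.
have -> : (r1 ++ [:: x] == r2 ++ [:: y]) = false.
  by rewrite eqseq_cat // eqseq_cons (negbTE Hxy) andbF.
case E: redgeT => [t'|] //; case: ifP => // g [<-].
have [e et a] := IH _ _ Hs Hxy E; subst t'.
by split => //=; rewrite g a.
Qed.

Section Map.
Variable psi : V -> V.
Hypothesis Hpsi : igs_map R R psi.

Lemma redgeT_map rw rv t : redgeT R rw rv = Some t -> exists a b,
  [/\ edge R a b, typ R a b = t &
   (psi a = psi b /\ map psi rw = map psi rv) \/
   ((edge R (psi a) (psi b) /\
      redgeT R (map psi rw) (map psi rv) = Some (typ R (psi a) (psi b))) \/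
    (edge R (psi b) (psi a) /\
      redgeT R (map psi rv) (map psi rw) = Some (typ R (psi b) (psi a))))].
Proof.
case: Hpsi => _ Hb Hc Hd He.
elim: rw rv t => [|x rw IH] [|y rv] t //=.
case: ifP => [/eqP eqr | neqr].
  case: ifP => // exy [<-]; exists x, y; split => //.
  case: (Hb x y exy) => [e|/orP [e|e]].
  - by left; split => //; rewrite eqr e.
  - by right; left; split => //=; rewrite eqr eqxx e.
  - by right; right; split => //=; rewrite eqr eqxx e.
case E: (redgeT R rw rv) => [t'|] //; case: ifP => // g [<-].
have [a [b [eab tab H]]] := IH _ _ E.
exists a, b; split => //.
rewrite -tab in g.
case: H => [[pab mr] | [[e r] | [e r]]].
- by left; split => //=; rewrite mr (Hc a b eab pab x y g).
- right; left; split => //=.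
  have -> : (map psi rw == map psi rv) = false.
    by apply/negP => /eqP ee; rewrite ee redgeT_refl in r.
  by rewrite r (Hd a b eab e x y g).
- right; right; split => //=.
  have -> : (map psi rv == map psi rw) = false.
    by apply/negP => /eqP ee; rewrite ee redgeT_refl in r.
  by rewrite r (He a b eab e x y g).
Qed.
End Map.

Definition good (psi : V -> V) :=
  (forall x, x \in sym R -> psi x \in sym R) /\
  forall m w v, Gedge R m w v ->
    [\/ map psi w = map psi v, Gedge R m (map psi w) (map psi v)
      | Gedge R m (map psi v) (map psi w)].

Lemma inW_map psi m w : (forall x, x \in sym R -> psi x \in sym R) ->
  inW R m w -> inW R m (map psi w).
Proof.
rewrite /inW size_map => H /andP[-> /allP A] /=; apply/allP => _ /mapP [x xw ->].
exact: H (A x xw).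
Qed.

Lemma good_igs psi : igs_map R R psi -> good psi.
Proof.
move=> Hp; split; first by case: Hp.
have Hs : forall x, x \in sym R -> psi x \in sym R by case: Hp.
move=> m w v /and3P [iw iv ne].
case E: redgeT ne => [t|] // _.
have [a [b [_ _ [[_ mr]|[[_ r]|[_ r]]]]]] := redgeT_map Hp E.
- constructor 1.
  by rewrite -(revK (map psi w)) -map_rev mr map_rev revK.
- by constructor 2; rewrite /Gedge !inW_map // -!map_rev r.
- by constructor 3; rewrite /Gedge !inW_map // -!map_rev r.
Qed.

Lemma good_id : good id.
Proof. by split => // m w v H; constructor 2; rewrite !map_id. Qed.

Lemma good_comp f g : good f -> good g -> good (g \o f).
Proof.
move=> [f1 f2] [g1 g2]; split; first by move=> x /f1 /g1.
move=> m w v H; rewrite !(map_comp g f).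
case: (f2 m w v H) => [e | e | e].
- by constructor 1; rewrite e.
- by case: (g2 _ _ _ e) => [e'|e'|e']; [constructor 1; rewrite e' | constructor 2 | constructor 3].
- by case: (g2 _ _ _ e) => [e'|e'|e']; [constructor 1; rewrite e' | constructor 3 | constructor 2].
Qed.

Lemma inW_cons m x u : inW R m.+1 (x :: u) = (x \in sym R) && inW R m u.
Proof. by rewrite /inW /= eqSS andbCA. Qed.

Lemma Gedge_cons m a u v : a \in sym R ->
  Gedge R m.+1 (a :: u) (a :: v) = Gedge R m u v.
Proof.
move=> Ha; rewrite /Gedge !inW_cons Ha /=.
case iu: (inW R m u) => //; case iv: (inW R m v) => //=.
rewrite !rev_cons -!cats1 redgeT_same // !size_rev.
by move: iu iv => /andP[/eqP -> _] /andP[/eqP -> _].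
Qed.

Lemma all2_map_eq (f g : V -> V) (r : rel V) :
  (forall p q, r p q -> f p = g q) ->
  forall s1 s2, all2 r s1 s2 -> map f s1 = map g s2.
Proof.
move=> H; elim => [|p s1 IH] [|q s2] //= /andP[rpq a].
by rewrite (H _ _ rpq) (IH _ a).
Qed.
End Gen.
Set Implicit Arguments. Unset Strict Implicit. Unset Printing Implicit Defensive.

Section Cube.
Variables (d L s : nat) (hd : 0 < d) (R : IGS (cubeV d L s) 'I_d).
Local Notation V := (cubeV d L s).

Definition flip (P : pred 'I_d) (w : V) : V :=
  ([ffun i => if P i then rev_ord (w.1 i) else w.1 i], w.2).

Lemma foldr_eta (sq : seq 'I_d) (w : V) : uniq sq ->
  foldr (fun j f => eta_map j \o f) id sq w =
  ([ffun i => if i \in sq then rev_ord (w.1 i) else w.1 i], w.2).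
Proof.
elim: sq => [|j sq IH] /=.
  by move=> _; case: w => f x /=; congr (_, _); apply/ffunP => i; rewrite ffunE.
case/andP => nj u; rewrite IH // /eta_map /=; congr (_, _); apply/ffunP => i.
rewrite !ffunE in_cons; case: (eqVneq i j) => [->|nij] //=.
by rewrite (negbTE nj).
Qed.

Definition gmap (a x : V) : V -> V :=
  foldr (fun j f => eta_map j \o f) id
    [seq i <- enum 'I_d | odd (x.1 i) != odd (a.1 i)].

Lemma gmapE a x w : gmap a x w = flip (fun i => odd (x.1 i) != odd (a.1 i)) w.
Proof.
rewrite /gmap foldr_eta; last exact: (filter_uniq _ (enum_uniq _)).
rewrite /flip; congr (_, _).
by apply/ffunP=> i; rewrite !ffunE mem_filter mem_enum andbT.
Qed.

Lemma gmap_id a w : gmap a a w = w.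
Proof.
rewrite gmapE; case: w => f x; congr (_, _); apply/ffunP=> i.
by rewrite !ffunE eqxx.
Qed.

Lemma gmap_cross a x y p q j : cedge j x y -> cglue j p q -> gmap a x p = gmap a y q.
Proof.
rewrite !gmapE /flip.
move=> /andP[/forallP ce /eqP cj] /and4P[/forallP cg /eqP pj /eqP qj /eqP e2].
have L0 : 0 < L := leq_ltn_trans (leq0n _) (ltn_ord (p.1 j)).
congr (_, _) => //; apply/ffunP => i; rewrite !ffunE.
case: (eqVneq i j) => [->|nij].
  rewrite cj /=.
  case: (odd (x.1 j)); case: (odd (a.1 j)) => /=; apply: val_inj => /=;
    rewrite ?pj ?qj ?prednK ?subnn ?subn1 //.
have := implyP (ce i) nij; have := implyP (cg i) nij.
by move=> /eqP -> /eqP ->.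
Qed.

Hypothesis HC : cubical hd R.

Lemma cub_irr x : ~~ edge R x x.
Proof.
case: HC => [[[[_ _ H _] _] _ _] _].
by apply/negP => e; move: (H x x e); rewrite e.
Qed.

Lemma good_gmap a x : good R (gmap a x).
Proof.
rewrite /gmap; elim: (filter _ _) => [|j sq IH] /=; first exact: good_id.
apply: good_comp IH _; apply: good_igs.
  exact: cub_irr.
case: HC => _ [_ _ [He _]]; have [psi [_ _ H1 _]] := He j; exact: H1.
Qed.

Lemma ctyp_cedge (x y : V) : [exists j, cedge j x y] -> cedge (ctyp hd x y) x y.
Proof.
case/existsP => j cj; rewrite /ctyp; case: pickP => [j' // | /(_ j)].
by rewrite cj.
Qed.

Lemma gmap_cross_R a x y p q : edge R x y -> glue R (typ R x y) p q ->
  gmap a x p = gmap a y q.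
Proof.
move=> exy g.
case: HC => [[_ [_ [_ Hb _ Hd He]] _] _].
case: (Hb x y exy) => [/= e | /orP [A|A]].
  by move: (cub_irr x); rewrite {2}e exy.
- move: (Hd x y exy A p q g) => /= cg.
  exact: gmap_cross (ctyp_cedge A) cg.
- move: (He x y exy A p q g) => /= cg.
  symmetry; exact: gmap_cross (ctyp_cedge A) cg.
Qed.
Definition Fm (a : V) (w : seq V) : seq V :=
  if w is x :: u then a :: map (gmap a x) u else [::].

Lemma F_folding a m : a \in sym R ->
  folding R m.+1 (fun y => exists u, inW R m u /\ y = a :: u) (Fm a).
Proof.
move=> Ha; have irr := cub_irr.
split.
- move=> [|x u]; first by rewrite /inW.
  rewrite inW_cons => /andP[xs iu]; exists (map (gmap a x) u); split => //.
  exact: inW_map (good_gmap a x).1 iu.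
- move=> [|x u] [|y v] /and3P[iu' iv' ne]; try by move: iu' iv'; rewrite /inW.
  move: iu' iv'; rewrite !inW_cons => /andP[xs iu] /andP[ys iv].
  rewrite !rev_cons -!cats1 in ne.
  have ss : size (rev u) = size (rev v).
    by move: iu iv => /andP[/eqP su _] /andP[/eqP sv _]; rewrite !size_rev su sv.
  case: (eqVneq x y) => [exy | nxy].
    subst y; rewrite redgeT_same // in ne.
    have Guv : Gedge R m u v by rewrite /Gedge iu iv ne.
    case: ((good_gmap a x).2 _ _ _ Guv) => [e|e|e].
    + by left; rewrite /= e.
    + by right; left; rewrite Gedge_cons.
    + by right; right; rewrite Gedge_cons.
  left; case E: redgeT ne => [t|] // _.
  have [exy et A] := redgeT_diff ss nxy E; subst t.
  have := all2_map_eq (fun p q => gmap_cross_R a (p:=p) (q:=q) exy) A.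
  by rewrite !map_rev => /(congr1 rev); rewrite !revK /= => ->.
- move=> _ [u [iu ->]] /=; congr cons.
  by elim: u {iu} => //= x u ->; rewrite gmap_id.
Qed.
End Cube.

Theorem proposition4p5 (d L s : nat) (hd : 0 < d) (hL : 3 <= L) (hs : 0 < s)
    (R : IGS (cubeV d L s) 'I_d) :
  cubical hd R ->
  forall (n : nat) (wt : seq (cubeV d L s)), inWsharp R wt ->
    exists phi : seq (cubeV d L s) -> seq (cubeV d L s),
      folding R (n + size wt) (prefixed R wt n) phi.
Proof.
move=> HC n wt [k [_ /andP[_ alls]]]; have irr := cub_irr HC.
elim: wt alls => [|a wt IH] /=.
  move=> _; exists id; rewrite addn0; split => //;
    try (by move=> x ix; exists x); try (by move=> x y G; right; left).
case/andP => Ha alls.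
have [phi' [Fa Fb Fc]] := IH alls.
rewrite addnS.
have [Ga Gb Gc] := F_folding HC (n + size wt) Ha.
exists (fun w => a :: phi' (behead (Fm a w))); split.
- move=> x ix; have [u [iu ->]] := Ga x ix.
  have [u' [iu' e']] := Fa u iu; exists u'; by rewrite /= e'.
- move=> x y G.
  have /and3P[ix iy _] := G.
  have [u [iu ex]] := Ga x ix; have [v [iv ey]] := Ga y iy.
  case: (Gb x y G) => [e|[e|e]]; first by left; rewrite e.
  + rewrite ex ey Gedge_cons // in e.
    case: (Fb _ _ e) => [e'|[e'|e']]; rewrite ex ey /=;
      [by left; rewrite e' | by right; left; rewrite Gedge_cons | by right; right; rewrite Gedge_cons].
  + rewrite ex ey Gedge_cons // in e.
    case: (Fb _ _ e) => [e'|[e'|e']]; rewrite ex ey /=;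
      [by left; rewrite e' | by right; right; rewrite Gedge_cons | by right; left; rewrite Gedge_cons].
- move=> _ [u [iu ->]].
  have iwu : inW R (n + size wt) (wt ++ u).
    by move: iu => /andP[/eqP su au]; rewrite /inW size_cat su addnC eqxx all_cat alls au.
  have -> : Fm a ((a :: wt) ++ u) = a :: (wt ++ u).
    by apply: Gc; exists (wt ++ u).
  by rewrite /= Fc //; exists u.
Qed.
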